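(* Let $G$ be a finitely generated group and $A$ a finitely generated abelian group on which $G$ acts with finite image in $\mathrm{Aut}(A)$. If a $2$-cocycle $\sigma:G\times G\to A$ is either right weakly bounded or left weakly bounded, then $\sigma$ is cohomologous to a $2$-cocycle that is both right and left weakly bounded.
   Context: The action is written $a\mapsto a^g$. A $2$-cocycle is $\sigma:G\times G\to A$ with $\sigma(g,h_1h_2)=\sigma(g,h_1)^{h_2}+\sigma(gh_1,h_2)-\sigma(h_1,h_2)$; two cocycles are cohomologous if they differ by $(g,h)\mapsto f(g)^h+f(h)-f(gh)$ for some $f:G\to A$. A cocycle $\sigma$ is left weakly bounded if $\sigma(g,G)$ is finite for every $g\in G$, and right weakly bounded if $\sigma(G,g)$ is finite for every $g\in G$. *)

(* Defs.v *)
From Stdlib Require List.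
From mathcomp Require Import all_boot all_algebra.
Set Implicit Arguments. Unset Strict Implicit. Unset Printing Implicit Defensive.
Import GRing.Theory.
Local Open Scope ring_scope.

Record group_law (G : Type) := GroupLaw {
  gmul : G -> G -> G;
  gone : G;
  ginv : G -> G;
  gmulA : forall x y z, gmul x (gmul y z) = gmul (gmul x y) z;
  gmul1 : forall x, gmul gone x = x;
  gmulV : forall x, gmul (ginv x) x = gone
}.

Inductive generated (G : Type) (L : group_law G) (S : list G) : G -> Prop :=
  | gen_base x : List.In x S -> generated L S x
  | gen_one : generated L S (gone L)
  | gen_inv x : generated L S x -> generated L S (ginv L x)
  | gen_mul x y : generated L S x -> generated L S y -> generated L S (gmul L x y).

Definition fin_gen_group (G : Type) (L : group_law G) : Prop :=
  exists S : list G, forall g, generated L S g.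

Definition fin_gen_zmod (A : zmodType) : Prop :=
  exists gens : seq A, forall a : A,
    exists k : nat -> int, a = \sum_(i < size gens) gens`_i *~ k i.

Definition is_action (G : Type) (L : group_law G) (A : zmodType)
  (act : A -> G -> A) : Prop :=
  [/\ forall a, act a (gone L) = a,
      forall a g h, act (act a g) h = act a (gmul L g h)
    & forall a b g, act (a + b) g = act a g + act b g].

Definition finite_image (G : Type) (A : zmodType) (act : A -> G -> A) : Prop :=
  exists s : list (A -> A), forall g, exists2 f, List.In f s & forall a, act a g = f a.

Definition cocycle2 (G : Type) (L : group_law G) (A : zmodType)
  (act : A -> G -> A) (sigma : G -> G -> A) : Prop :=
  forall g h1 h2,
    sigma g (gmul L h1 h2) =
      act (sigma g h1) h2 + sigma (gmul L g h1) h2 - sigma h1 h2.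

Definition cohomologous (G : Type) (L : group_law G) (A : zmodType)
  (act : A -> G -> A) (sigma sigma' : G -> G -> A) : Prop :=
  exists f : G -> A, forall g h,
    sigma' g h - sigma g h = act (f g) h + f h - f (gmul L g h).

Definition left_weakly_bounded (G : Type) (A : zmodType) (sigma : G -> G -> A) : Prop :=
  forall g, exists s : seq A, forall h, sigma g h \in s.

Definition right_weakly_bounded (G : Type) (A : zmodType) (sigma : G -> G -> A) : Prop :=
  forall g, exists s : seq A, forall h, sigma h g \in s.

(* Main.v *)
From HB Require Import structures.
Require Import Defs.
From Stdlib Require Import ClassicalEpsilon Classical.
From mathcomp Require Import all_boot all_order all_algebra.
From mathcomp Require Import zify ring.
Set Implicit Arguments. Unset Strict Implicit. Unset Printing Implicit Defensive.
Import GRing.Theory Num.Theory Order.TTheory.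
Local Open Scope ring_scope.
(* dual numbers int x A: a commutative ring used to prove Z-module identities with ring *)
Definition dnum (A : zmodType) := (int * A)%type.
HB.instance Definition _ (A : zmodType) := GRing.Zmodule.on (dnum A).
Section Dnum.
Variable A : zmodType.
Definition dmul (x y : dnum A) : dnum A := (x.1 * y.1, y.2 *~ x.1 + x.2 *~ y.1).
Definition done : dnum A := (1, 0).
Lemma dmulA : associative dmul.
Proof.
move=> [a x] [b y] [c z]; rewrite /dmul /=; congr (_, _); first by rewrite mulrA.
by rewrite !mulrzDl -!mulrzA addrA; congr (_ + _ + _); rewrite mulrC.
Qed.
Lemma dmulC : commutative dmul.
Proof. by move=> [a x] [b y]; rewrite /dmul /= mulrC addrC. Qed.
Lemma dmul1 : left_id done dmul.
Proof. by move=> [a x]; rewrite /dmul /= mul1r mul0rz mulr1z addr0. Qed.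
Lemma dmulDl : left_distributive dmul +%R.
Proof.
move=> [a x] [b y] [c z]; rewrite /dmul /=; congr (_, _); first by rewrite mulrDl.
by rewrite mulrzDr mulrzDl addrACA.
Qed.
Lemma done_neq0 : done != 0.
Proof. by rewrite /done; apply/eqP; case. Qed.
HB.instance Definition _ := GRing.Zmodule_isComNzRing.Build (dnum A) dmulA dmulC dmul1 dmulDl done_neq0.
Definition demb (a : A) : dnum A := (0, a).
Lemma dembD a b : demb (a + b) = demb a + demb b.
Proof. by []. Qed.
Lemma dembN a : demb (- a) = - demb a.
Proof. by rewrite /demb; congr (_, _); rewrite oppr0. Qed.
Lemma dembB a b : demb (a - b) = demb a - demb b.
Proof. by rewrite dembD dembN. Qed.
Lemma demb0 : demb 0 = 0.
Proof. by []. Qed.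
Lemma demb_inj a b : demb a = demb b -> a = b.
Proof. by case. Qed.
End Dnum.

Ltac zsolve := apply: demb_inj; rewrite ?(dembD, dembN, dembB, demb0); ring.

Goal forall (A: zmodType) (a b c : A), a + b - c = b - c + a.
Proof. move=> A a b c. zsolve. Qed.
Section Grp.
Variables (G : Type) (L : group_law G).

Lemma gmulK x y z : gmul L x y = gmul L x z -> y = z.
Proof.
move=> h. by rewrite -(gmul1 L y) -(gmulV L x) -gmulA h gmulA gmulV gmul1.
Qed.

Lemma gmulVr x : gmul L x (ginv L x) = gone L.
Proof.
set e := gmul L x (ginv L x).
have ee : gmul L e e = e.
  by rewrite /e -gmulA (gmulA L (ginv L x)) gmulV gmul1.
by rewrite -(gmulV L e) -{3}ee gmulA gmulV gmul1.
Qed.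

Lemma gmul1r x : gmul L x (gone L) = x.
Proof. by rewrite -(gmulV L x) gmulA gmulVr gmul1. Qed.

Lemma ginvK x : ginv L (ginv L x) = x.
Proof.
apply: (@gmulK (ginv L x)). by rewrite gmulVr gmulV.
Qed.

Lemma ginvM x y : ginv L (gmul L x y) = gmul L (ginv L y) (ginv L x).
Proof.
apply: (@gmulK (gmul L x y)). rewrite gmulVr -gmulA (gmulA L y) gmulVr gmul1 gmulVr //.
Qed.

Lemma gmulKV x y : gmul L (ginv L x) (gmul L x y) = y.
Proof. by rewrite gmulA gmulV gmul1. Qed.

Lemma gmulVK x y : gmul L x (gmul L (ginv L x) y) = y.
Proof. by rewrite gmulA gmulVr gmul1. Qed.

Lemma gmulrK x y : gmul L (gmul L y x) (ginv L x) = y.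
Proof. by rewrite -gmulA gmulVr gmul1r. Qed.

Lemma gmulrVK x y : gmul L (gmul L y (ginv L x)) x = y.
Proof. by rewrite -gmulA gmulV gmul1r. Qed.

End Grp.
Section Words.
Variables (G : Type) (L : group_law G) (m : nat) (gen : 'I_m -> G).

Definition wprod (w : seq 'I_m) : G := foldr (fun i x => gmul L (gen i) x) (gone L) w.

Lemma wprod_cons i w : wprod (i :: w) = gmul L (gen i) (wprod w).
Proof. by []. Qed.

Lemma wprod_cat w1 w2 : wprod (w1 ++ w2) = gmul L (wprod w1) (wprod w2).
Proof.
elim: w1 => [|i w IH] /=; first by rewrite gmul1.
by rewrite IH gmulA.
Qed.

Lemma wprod_rcons w i : wprod (rcons w i) = gmul L (wprod w) (gen i).
Proof. by rewrite -cats1 wprod_cat /= gmul1r. Qed.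

End Words.

Lemma In_nth_seq (T : Type) (d : T) (s : seq T) x :
  List.In x s -> exists i, (i < size s)%N /\ nth d s i = x.
Proof.
elim: s => [|y s IH] //= [->|/IH [i [hi hx]]]; first by exists 0%N.
by exists i.+1.
Qed.

Lemma words_exist (G : Type) (L : group_law G) :
  fin_gen_group L ->
  exists m (gen : 'I_m -> G),
    (forall i, exists i', gen i' = ginv L (gen i)) /\
    (forall g, exists w, wprod L gen w = g).
Proof.
case=> S HS.
pose S' := S ++ map (ginv L) S.
have szS' : size S' = (size S + size S)%N by rewrite size_cat size_map.
pose m := size S'.
pose gen := fun i : 'I_m => nth (gone L) S' i.
have Hinv : forall i : 'I_m, exists i', gen i' = ginv L (gen i).
  move=> [i hi]; rewrite /gen /=.
  case: (ltnP i (size S)) => hiS.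
  - have hi' : (i + size S < m)%N by rewrite /m szS' ltn_add2r.
    exists (Ordinal hi') => /=.
    by rewrite nth_cat ltnNge leq_addl /= addnK (nth_map (gone L)) // nth_cat hiS.
  - have hi' : (i - size S < m)%N by apply: leq_ltn_trans (leq_subr _ _) hi.
    exists (Ordinal hi') => /=.
    have hb : (i - size S < size S)%N.
      by rewrite -(ltn_add2r (size S)) subnK // -szS'.
    by rewrite (nth_cat _ _ _ i) ltnNge hiS /= (nth_map (gone L)) // ginvK nth_cat hb.
exists m, gen; split=> // g.
have [iinv Hiinv] : exists iinv : 'I_m -> 'I_m, forall i, gen (iinv i) = ginv L (gen i).
  exists (fun i => proj1_sig (constructive_indefinite_description _ (Hinv i))).
  move=> i; exact: (proj2_sig (constructive_indefinite_description _ (Hinv i))).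
elim: (HS g) => {g} [x hx | | x _ [w <-] | x y _ [w1 <-] _ [w2 <-]].
- have [i [hi <-]] := In_nth_seq (gone L) hx.
  have hi' : (i < m)%N by rewrite /m szS' (leq_trans hi) // leq_addr.
  exists [:: Ordinal hi'] => /=; rewrite gmul1r /gen /= nth_cat hi //.
- by exists [::].
- exists (rev (map iinv w)).
  elim: w => [|i w IH] /=; first by rewrite -{1}(gmulV L (gone L)) gmul1r.
  by rewrite rev_cons wprod_rcons IH Hiinv ginvM.
- by exists (w1 ++ w2); rewrite wprod_cat.
Qed.
Definition pb (P : Prop) : bool := if excluded_middle_informative P then true else false.
Lemma pbE (P : Prop) : pb P <-> P.
Proof. by rewrite /pb; case: excluded_middle_informative. Qed.

Lemma classes_exist (G : Type) (L : group_law G) (A : zmodType) (act : A -> G -> A) :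
  finite_image act ->
  exists p (gg : 'I_p -> G) (J : {set 'I_p}),
   (forall j1 j2, j1 \in J -> j2 \in J -> (forall a, act a (gg j1) = act a (gg j2)) -> j1 = j2) /\
   (forall x, exists j, j \in J /\ forall a, act a x = act a (gg j)).
Proof.
case=> s Hs.
pose p := size s.
pose f := fun i : nat => nth (fun a : A => a) s i.
pose real := fun i : 'I_p => exists g, forall a, act a g = f i a.
pose gg := fun i : 'I_p => match excluded_middle_informative (real i) with
   | left h => proj1_sig (constructive_indefinite_description _ h)
   | right _ => gone L end.
have Hgg : forall i, real i -> forall a, act a (gg i) = f i a.
  move=> i ri a; rewrite /gg; case: excluded_middle_informative => // h.
  exact: (proj2_sig (constructive_indefinite_description _ h)).
pose J := [set i : 'I_p | pb (real i /\ forall i' : 'I_p, (i' < i)%N -> ~ (forall a, f i' a = f i a))].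
exists p, gg, J; split.
- move=> j1 j2; rewrite !inE => /pbE [r1 h1] /pbE [r2 h2] e.
  have ef : forall a, f j1 a = f j2 a by move=> a; rewrite -Hgg // -Hgg // e.
  apply: val_inj => /=; case: (ltngtP j1 j2) => // c.
  + by case: (h2 _ c).
  + by case: (h1 _ c) => a; rewrite ef.
- move=> x.
  have [fx fin ex] := Hs x.
  have [i [hi hfi]] := In_nth_seq (fun a : A => a) fin.
  have exP : exists n, (fun n => (n < p)%N && pb (forall a, f n a = f i a)) n.
    by exists i; rewrite hi /=; apply/pbE.
  case: (ex_minnP exP) => i0 /andP [hi0 /pbE e0] hmin.
  have ri0 : real (Ordinal hi0) by exists x => a; rewrite /= e0 /f hfi ex.
  exists (Ordinal hi0); split.
  + rewrite inE; apply/pbE; split => // i' hi' hc.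
    have := hmin i'; rewrite ltn_ord /=.
    have -> : pb (forall a, f i' a = f i a) by apply/pbE => a; rewrite hc e0.
    by move/(_ isT); rewrite leqNgt hi'.
  + by move=> a; rewrite Hgg //= e0 /f hfi ex.
Qed.
Section AddFun.
Variables (A : zmodType) (f : A -> int).
Hypothesis fD : forall a b, f (a + b) = f a + f b.

Lemma af0 : f 0 = 0.
Proof. by apply/eqP; rewrite -(addrI (f 0) (_ : f 0 + f 0 = f 0 + 0)) // -fD !addr0. Qed.

Lemma afN a : f (- a) = - f a.
Proof. by apply/eqP; rewrite -addr_eq0 -fD addNr af0. Qed.

Lemma afB a b : f (a - b) = f a - f b.
Proof. by rewrite fD afN. Qed.

Lemma afMn a k : f (a *+ k) = f a *+ k.
Proof. by elim: k => [|k IH]; rewrite ?mulr0n ?af0 // !mulrS fD IH. Qed.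

Lemma afMz a z : f (a *~ z) = f a * z.
Proof.
case: z => k; first by rewrite -pmulrn afMn -mulr_natr natz.
by rewrite NegzE mulrNz afN -pmulrn afMn mulrN -mulr_natr natz.
Qed.

Lemma af_sum (I : Type) (r : seq I) (P : pred I) (F : I -> A) :
  f (\sum_(i <- r | P i) F i) = \sum_(i <- r | P i) f (F i).
Proof.
elim: r => [|x r IH]; first by rewrite !big_nil af0.
by rewrite !big_cons; case: (P x); rewrite ?fD IH.
Qed.
End AddFun.
Section ZStruct.
Variables (A : zmodType) (gens : seq A).
Local Notation sz := (size gens).
Local Notation a := (fun i : 'I_sz => gens`_i).

Definition indep (I : {set 'I_sz}) :=
  forall c : 'I_sz -> int, \sum_(i in I) a i *~ c i = 0 -> forall i, i \in I -> c i = 0.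

Lemma max_indep : exists I, indep I /\ forall J, indep J -> (#|J| <= #|I|)%N.
Proof.
pose P := fun k => pb (exists I, indep I /\ #|I| = k).
have exP : exists k, P k.
  exists 0%N; apply/pbE; exists set0; split; last by rewrite cards0.
  by move=> c _ i; rewrite inE.
have ubP : forall k, P k -> (k <= sz)%N.
  by move=> k /pbE [I [_ <-]]; apply: leq_trans (max_card _) _; rewrite card_ord.
case: (ex_maxnP exP ubP) => k /pbE [I [hI hk]] hmax.
exists I; split=> // J hJ; rewrite hk; apply: hmax; apply/pbE; by exists J.
Qed.

Lemma zmod_struct :
  (forall x, exists k : nat -> int, x = \sum_(i < sz) gens`_i *~ k i) ->
  exists (lam : 'I_sz -> A -> int) (e : 'I_sz -> A) (N : nat),
    [/\ (0 < N)%N, (forall l x y, lam l (x + y) = lam l x + lam l y) &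
        forall x, \sum_(l < sz) e l *~ lam l x = x *+ N].
Proof.
move=> Hgen.
have [I [hI hmax]] := max_indep.
have hd : forall j, exists d : int, d != 0 /\ exists c, a j *~ d = \sum_(i in I) a i *~ c i.
  move=> j; case: (boolP (j \in I)) => hj.
    exists 1; split => //; exists (fun i => (i == j)%:Z).
    rewrite (bigD1 j) //= eqxx big1 ?addr0 // => i /andP [_ /negbTE ->].
    by rewrite mulr0z.
  have nind : ~ indep (j |: I).
    move=> hJ; have := hmax _ hJ; by rewrite cardsU1 hj ltnn.
  have [c hc] := not_all_ex_not _ _ nind.
  have [hs hc'] := imply_to_and _ _ hc.
  have [i hi] := not_all_ex_not _ _ hc'.
  have [hiJ hci] := imply_to_and _ _ hi.
  rewrite big_setU1 //= in hs.
  have cj : c j != 0.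
    apply/eqP => cj0; rewrite cj0 mulr0z add0r in hs.
    case/setU1P: hiJ => [eij|hiI]; first by apply: hci; rewrite eij.
    by apply: hci; apply: hI hs _ hiI.
  exists (c j); split => //; exists (fun i => - c i).
  rewrite (eq_bigr (fun k => - (a k *~ c k))) => [|k _]; last by rewrite mulrNz.
  by rewrite sumrN; apply/eqP; rewrite -addr_eq0 hs.
have [dd hdd] : exists dd : 'I_sz -> int, forall j, dd j != 0 /\
    exists c, a j *~ dd j = \sum_(i in I) a i *~ c i.
  exists (fun j => proj1_sig (constructive_indefinite_description _ (hd j))).
  move=> j; exact: (proj2_sig (constructive_indefinite_description _ (hd j))).
pose inspan := fun x : A => exists c : 'I_sz -> int, x = \sum_(i in I) a i *~ c i.
have sp0 : inspan 0 by exists (fun _ => 0); rewrite big1 // => i _; rewrite mulr0z.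
have spD : forall x y, inspan x -> inspan y -> inspan (x + y).
  move=> x y [c ->] [c' ->]; exists (fun i => c i + c' i).
  by rewrite -big_split; apply: eq_bigr => i _; rewrite mulrzDr.
have spZ : forall x z, inspan x -> inspan (x *~ z).
  move=> x z [c ->]; exists (fun i => c i * z).
  by rewrite mulrz_suml; apply: eq_bigr => i _; rewrite mulrzA.
have spN : forall x, inspan x -> inspan (- x).
  by move=> x hx; rewrite -mulrN1z; apply: spZ.
pose N := (\prod_(j < sz) `|dd j|)%N.
have N0 : (0 < N)%N by apply: prodn_gt0 => j; rewrite absz_gt0; case: (hdd j).
have spa : forall j, inspan (a j *+ N).
  move=> j; rewrite /N (bigD1 j) //= pmulrn PoszM mulrzA.
  apply: spZ; rewrite abszE.
  have [c hc] := (hdd j).2.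
  have spd : inspan (a j *~ dd j) by exists c.
  case: (lerP 0 (dd j)) => hs; first by rewrite ger0_norm.
  by rewrite ltr0_norm // mulrNz; apply: spN.
have spx : forall x, inspan (x *+ N).
  move=> x; have [k ->] := Hgen x.
  rewrite -sumrMnl; apply: (big_ind inspan) => //= i _.
  by rewrite pmulrn mulrzAC -pmulrn; apply: spZ.
have [cx hcx] : exists cx : A -> 'I_sz -> int, forall x, x *+ N = \sum_(i in I) a i *~ cx x i.
  exists (fun x => proj1_sig (constructive_indefinite_description _ (spx x))).
  move=> x; exact: (proj2_sig (constructive_indefinite_description _ (spx x))).
exists (fun l x => if l \in I then cx x l else 0), (fun l => if l \in I then a l else 0), N.
split => //.
- move=> l x y; case: (boolP (l \in I)) => hl; last by rewrite addr0.
  pose c' := fun i => cx (x + y) i - (cx x i + cx y i).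
  have : \sum_(i in I) a i *~ c' i = 0.
    under eq_bigr do rewrite mulrzBr mulrzDr.
    by rewrite sumrB big_split /= -!hcx mulrnDl subrr.
  by move/hI => /(_ l hl) /eqP; rewrite subr_eq0 => /eqP.
- move=> x; rewrite hcx [RHS]big_mkcond /=; apply: eq_bigr => l _.
  by case: (l \in I); rewrite ?mulr0z.
Qed.
End ZStruct.
Lemma reps_exist (A : zmodType) (gens : seq A) :
  (forall x, exists k : nat -> int, x = \sum_(i < size gens) gens`_i *~ k i) ->
  forall M : nat, (0 < M)%N -> exists R : seq A, forall x, exists r c, r \in R /\ x = r + c *+ M.
Proof.
move=> Hg M M0.
exists (map (fun f : {ffun 'I_(size gens) -> 'I_M} =>
   \sum_(i < size gens) gens`_i *~ (f i : nat)%:Z) (enum {ffun 'I_(size gens) -> 'I_M})).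
move=> x; have [k ->] := Hg x.
have hM : (M%:Z != 0) by rewrite eqz_nat -lt0n.
have hk : forall i, (absz (k i %% M)%Z < M)%N.
  move=> i; have := ltz_mod (k i) hM; have := modz_ge0 (k i) hM; lia.
pose f := [ffun i : 'I_(size gens) => Ordinal (hk i)].
exists (\sum_(i < size gens) gens`_i *~ (f i : nat)%:Z),
       (\sum_(i < size gens) gens`_i *~ (k i %/ M)%Z); split.
  by apply: map_f; rewrite mem_enum.
rewrite -sumrMnl -big_split /=; apply: eq_bigr => i _.
rewrite ffunE /= pmulrn -mulrzA -mulrzDr.
have := modz_ge0 (k i) hM => h0.
congr (_ *~ _); rewrite {1}(divz_eq (k i) M); lia.
Qed.

Lemma le_sum_mem (T : eqType) (s : seq T) (F : T -> int) x :
  (forall y, 0 <= F y) -> x \in s -> F x <= \sum_(y <- s) F y.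
Proof.
move=> F0; elim: s => [|y s IH] //; rewrite in_cons big_cons => /orP [/eqP ->|hx].
  by rewrite lerDl sumr_ge0.
by apply: le_trans (IH hx) _; rewrite lerDr.
Qed.

Section Ball.
Variables (A : zmodType) (n : nat) (lam : 'I_n -> A -> int) (e : 'I_n -> A) (N : nat).
Hypotheses (N0 : (0 < N)%N) (lamD : forall l x y, lam l (x + y) = lam l x + lam l y)
  (lamE : forall x, \sum_(l < n) e l *~ lam l x = x *+ N)
  (reps : exists R : seq A, forall x, exists r c, r \in R /\ x = r + c *+ N).

Lemma lam_ball (B : int) : exists s : seq A, forall x, (forall l, `|lam l x| <= B) -> x \in s.
Proof.
have [R HR] := reps.
pose Rb := \sum_(r <- R) \sum_(l < n) `|lam l r|.
pose K := absz (B + Rb).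
pose Y := map (fun f : {ffun 'I_n -> 'I_(2 * K).+1} =>
   \sum_(l < n) e l *~ ((f l : nat)%:Z - K%:Z)) (enum {ffun 'I_n -> 'I_(2 * K).+1}).
exists [seq r + y | r <- R, y <- Y] => x hx.
have [r [u [hr ex]]] := HR x; rewrite ex in hx *.
have hu : forall l, `|lam l u| <= K%:Z.
  move=> l; have := hx l; rewrite lamD afMn; last exact: lamD.
  have : `|lam l r| <= Rb.
    apply: (le_trans _ (le_sum_mem (F := fun y => \sum_(l0 < n) `|lam l0 y|) _ hr)).
      by rewrite (bigD1 l) //= lerDl sumr_ge0.
    by move=> y; apply: sumr_ge0.
  rewrite /K -mulr_natr; move: (lam l u) (lam l r) => p q h1 h2.
  have : (1 <= N)%N by [].
  nia.
apply: allpairs_f => //.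
have hf : forall l, (absz (lam l u + K%:Z)%R < (2 * K).+1)%N.
  move=> l; have := hu l; lia.
apply/mapP; exists [ffun l => Ordinal (hf l)]; first by rewrite mem_enum.
rewrite -lamE; apply: eq_bigr => l _; rewrite ffunE /=; congr (_ *~ _).
have := hu l; lia.
Qed.
End Ball.
Lemma int_max (P : int -> Prop) :
  (exists x, P x) -> (exists B, forall x, P x -> x <= B) ->
  exists M, P M /\ forall x, P x -> x <= M.
Proof.
move=> [x0 h0] [B hB].
apply: NNPP => hn.
have step : forall M, P M -> exists y, P y /\ M < y.
  move=> M hM; apply: NNPP => hy; apply: hn; exists M; split=> // x hx.
  by rewrite leNgt; apply/negP => hlt; apply: hy; exists x.
have gen : forall k : nat, exists y, P y /\ x0 + k%:Z <= y.
  elim=> [|k [y [hy hk]]]; first by exists x0; rewrite addr0.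
  have [z [hz hyz]] := step y hy; exists z; split => //; lia.
have [y [hy hk]] := gen (absz (B - x0)).+1.
have := hB y hy; lia.
Qed.
Section Main.
Variables (G : Type) (L : group_law G) (A : zmodType) (act : A -> G -> A) (sigma : G -> G -> A).
Hypotheses (act1 : forall a, act a (gone L) = a)
  (actM : forall a g h, act (act a g) h = act a (gmul L g h))
  (actD : forall a b g, act (a + b) g = act a g + act b g).
Hypothesis coc : cocycle2 L act sigma.
Variables (m : nat) (gen : 'I_m -> G).
Hypotheses (gen_inv : forall i, exists i', gen i' = ginv L (gen i))
  (gen_all : forall g, exists w, wprod L gen w = g).
Variables (p : nat) (gg : 'I_p -> G) (J : {set 'I_p}).
Hypotheses (Jdist : forall j1 j2, j1 \in J -> j2 \in J ->
     (forall a, act a (gg j1) = act a (gg j2)) -> j1 = j2)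
  (Jcov : forall x, exists j, j \in J /\ forall a, act a x = act a (gg j)).
Variables (n : nat) (lam : 'I_n -> A -> int) (e : 'I_n -> A) (N : nat).
Hypotheses (N0 : (0 < N)%N) (lamD : forall l x y, lam l (x + y) = lam l x + lam l y)
  (lamE : forall x, \sum_(l < n) e l *~ lam l x = x *+ N)
  (lball : forall B : int, exists s : seq A, forall x, (forall l, `|lam l x| <= B) -> x \in s).

Local Notation "x ** y" := (gmul L x y) (at level 40, left associativity).
Local Notation one := (gone L).
Local Notation inv := (ginv L).

Lemma act0 g : act 0 g = 0.
Proof.
have h : act 0 g + act 0 g = act 0 g + 0 by rewrite -actD !addr0.
exact: (addrI _ h).
Qed.
Lemma actN a g : act (- a) g = - act a g.
Proof. by apply/eqP; rewrite -addr_eq0 -actD addNr act0. Qed.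
Lemma actB a b g : act (a - b) g = act a g - act b g.
Proof. by rewrite actD actN. Qed.
Lemma actMn a k g : act (a *+ k) g = act a g *+ k.
Proof. by elim: k => [|k IH]; rewrite ?mulr0n ?act0 // !mulrS actD IH. Qed.
Lemma actMz a z g : act (a *~ z) g = act a g *~ z.
Proof.
case: z => k; first by rewrite -!pmulrn actMn.
by rewrite NegzE !mulrNz actN -!pmulrn actMn.
Qed.
Lemma act_sum (I : Type) (r : seq I) (P : pred I) (F : I -> A) g :
  act (\sum_(i <- r | P i) F i) g = \sum_(i <- r | P i) act (F i) g.
Proof.
elim: r => [|x r IH]; first by rewrite !big_nil act0.
by rewrite !big_cons; case: (P x); rewrite ?actD IH.
Qed.
Lemma actV a g : act (act a g) (inv g) = a.
Proof. by rewrite actM gmulVr act1. Qed.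

Lemma acteq_left k x y : (forall a, act a x = act a y) -> forall a, act a (k ** x) = act a (k ** y).
Proof. by move=> h a; rewrite -!actM h. Qed.
Lemma acteq_cancel k x y : (forall a, act a (k ** x) = act a (k ** y)) -> forall a, act a x = act a y.
Proof. by move=> h a; have := h (act a (inv k)); rewrite !actM !gmulKV. Qed.

Lemma lam0 l : lam l 0 = 0. Proof. exact: af0. Qed.
Lemma lamN l x : lam l (- x) = - lam l x. Proof. exact: afN. Qed.
Lemma lamMz l x z : lam l (x *~ z) = lam l x * z. Proof. exact: afMz. Qed.

Lemma sig_x1 x : sigma x one = sigma one one.
Proof.
have := coc x one one; rewrite gmul1 act1 gmul1r => h.
apply: (addrI (sigma x one)); rewrite {3}h; zsolve.
Qed.
Lemma sig_1h h : sigma one h = act (sigma one one) h.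
Proof. by have := coc one one h; rewrite !gmul1 addrK. Qed.

Definition tauJ (k : G) (j : 'I_p) : 'I_p :=
  if j \in J then proj1_sig (constructive_indefinite_description _ (Jcov (k ** gg j))) else j.

Lemma tauJ_spec k j : j \in J -> tauJ k j \in J /\ forall a, act a (k ** gg j) = act a (gg (tauJ k j)).
Proof.
move=> hj; rewrite /tauJ hj.
exact: (proj2_sig (constructive_indefinite_description _ (Jcov (k ** gg j)))).
Qed.
Lemma tauJ_inE k j : (tauJ k j \in J) = (j \in J).
Proof.
case: (boolP (j \in J)) => hj; first by case: (tauJ_spec k hj).
by rewrite /tauJ (negbTE hj) (negbTE hj).
Qed.
Lemma tauJ_inj k : injective (tauJ k).
Proof.
move=> j1 j2; case: (boolP (j1 \in J)) => h1; case: (boolP (j2 \in J)) => h2.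
- move=> e12; have [i1 s1] := tauJ_spec k h1; have [i2 s2] := tauJ_spec k h2.
  apply: Jdist => //; apply: (@acteq_cancel k) => a; by rewrite s1 s2 e12.
- move=> e12; have := tauJ_inE k j2; rewrite -e12 tauJ_inE h1 (negbTE h2) //.
- move=> e12; have := tauJ_inE k j1; rewrite e12 tauJ_inE h2 (negbTE h1) //.
- by rewrite /tauJ (negbTE h1) (negbTE h2).
Qed.
Lemma tauJ_cancel k k' j : k' ** k = one -> j \in J -> tauJ k' (tauJ k j) = j.
Proof.
move=> hk hj; have [h1 s1] := tauJ_spec k hj; have [h2 s2] := tauJ_spec k' h1.
apply: Jdist => // a; rewrite -s2 -(acteq_left k' s1) gmulA hk gmul1 //.
Qed.

Lemma sumJ_tau (V : zmodType) (F : 'I_p -> V) k :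
  \sum_(j in J) F j = \sum_(j in J) F (tauJ k j).
Proof.
rewrite (reindex_inj (@tauJ_inj k)) /=; apply: eq_bigl => j; by rewrite tauJ_inE.
Qed.

Definition j1 : 'I_p := proj1_sig (constructive_indefinite_description _ (Jcov one)).
Lemma j1_spec : j1 \in J /\ forall a, act a (gg j1) = a.
Proof.
have [h s] := proj2_sig (constructive_indefinite_description _ (Jcov one)).
by split=> // a; rewrite /j1 -s act1.
Qed.

Definition nrm (a : A) : int := \sum_(j in J) \sum_(l < n) `|lam l (act a (gg j))|.

Lemma nrm_ge0 a : 0 <= nrm a.
Proof. by apply: sumr_ge0 => j _; apply: sumr_ge0. Qed.
Lemma nrmD a b : nrm (a + b) <= nrm a + nrm b.
Proof.
rewrite /nrm -big_split ler_sum // => j _; rewrite -big_split ler_sum // => l _.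
by rewrite actD lamD ler_normD.
Qed.
Lemma nrmN a : nrm (- a) = nrm a.
Proof. by apply: eq_bigr => j _; apply: eq_bigr => l _; rewrite actN lamN normrN. Qed.
Lemma nrmB a b : nrm (a - b) <= nrm a + nrm b.
Proof. by rewrite -(nrmN b) nrmD. Qed.
Lemma nrm0 : nrm 0 = 0.
Proof. by rewrite /nrm big1 // => j _; rewrite big1 // => l _; rewrite act0 lam0. Qed.
Lemma nrm_act a k : nrm (act a k) = nrm a.
Proof.
rewrite /nrm [RHS](sumJ_tau _ k); apply: eq_bigr => j hj; apply: eq_bigr => l _.
by rewrite actM (tauJ_spec k hj).2.
Qed.
Lemma nrmMz a z : nrm (a *~ z) = nrm a * `|z|.
Proof.
rewrite /nrm mulr_suml; apply: eq_bigr => j _; rewrite mulr_suml; apply: eq_bigr => l _.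
by rewrite actMz lamMz normrM.
Qed.
Lemma nrmMn a k : nrm (a *+ k) = nrm a * k%:Z.
Proof. by rewrite pmulrn nrmMz. Qed.
Lemma mu_le_nrm l j a : j \in J -> `|lam l (act a (gg j))| <= nrm a.
Proof.
move=> hj; rewrite /nrm (bigD1 j) //= (bigD1 l) //= -addrA lerDl addr_ge0 //.
  by apply: sumr_ge0.
by apply: sumr_ge0 => i _; apply: sumr_ge0.
Qed.
Lemma lam_le_nrm l a : `|lam l a| <= nrm a.
Proof. by have [h s] := j1_spec; rewrite -{1}(s a) mu_le_nrm. Qed.
Lemma nrm_sum (I : Type) (r : seq I) (P : pred I) (F : I -> A) :
  nrm (\sum_(i <- r | P i) F i) <= \sum_(i <- r | P i) nrm (F i).
Proof.
elim: r => [|x r IH]; first by rewrite !big_nil nrm0.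
rewrite !big_cons; case: (P x) => //; apply: le_trans (nrmD _ _) _; by rewrite lerD2l.
Qed.
Lemma nrm_ball (B : int) : exists s : seq A, forall x, nrm x <= B -> x \in s.
Proof.
have [s hs] := lball B; exists s => x hx; apply: hs => l; exact: le_trans (lam_le_nrm l x) hx.
Qed.
Lemma nrm_list (s : seq A) : exists B, forall x, x \in s -> nrm x <= B.
Proof.
exists (\sum_(y <- s) nrm y) => x hx; exact: le_sum_mem nrm_ge0 hx.
Qed.


Variable Lb : int.
Hypotheses (Lb0 : 0 <= Lb) (HLb : forall i x, nrm (sigma x (gen i)) <= Lb).
Hypothesis rwbn : forall g, exists B, forall x, nrm (sigma x g) <= B.

Local Notation wp := (wprod L gen).

Definition step (st : A * G) (i : 'I_m) : A * G :=
  (act st.1 (gen i) + sigma st.2 (gen i), st.2 ** gen i).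
Definition run st w := foldl step st w.
Definition ystep (y st : A * G) : A * G := (act st.1 y.2 + y.1 + sigma st.2 y.2, st.2 ** y.2).
Definition val y w1 w2 := (run (ystep y (run (0, one) w1)) w2).1.
Definition adm j (y : A * G) w1 w2 :=
  (wp w1 ** y.2) ** wp w2 = one /\ forall a, act a (wp w2) = act a (gg j).
Definition score l y w1 w2 : int := lam l (val y w1 w2) - Lb * (size w1 + size w2)%N%:Z.

Lemma run_rcons st w i : run st (rcons w i) = step (run st w) i.
Proof. by rewrite /run foldl_rcons. Qed.

Lemma run_lin st c w : run (st.1 + c, st.2) w = ((run st w).1 + act c (wp w), (run st w).2).
Proof.
elim: w st c => [|i w IH] st c; first by rewrite /= act1; case: st.
have hs : step (st.1 + c, st.2) i = ((step st i).1 + act c (gen i), (step st i).2).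
  by rewrite /step /= actD; congr pair; zsolve.
change (run (step (st.1 + c, st.2) i) w = ((run (step st i) w).1 + act c (wp (i :: w)),
   (run (step st i) w).2)).
by rewrite hs IH wprod_cons actM.
Qed.

Lemma run_bound st w : nrm (run st w).1 <= nrm st.1 + Lb * (size w)%:Z.
Proof.
elim: w st => [|i w IH] st /=; first by rewrite mulr0 addr0.
apply: le_trans (IH _) _.
have h : nrm (step st i).1 <= nrm st.1 + Lb.
  by apply: le_trans (nrmD _ _) _; rewrite nrm_act lerD2l HLb.
move: h; rewrite -/(size w).+1; lia.
Qed.

Lemma val_shift b c g w1 w2 : val (b + c, g) w1 w2 = val (b, g) w1 w2 + act c (wp w2).
Proof.
rewrite /val; set st := run _ w1.
have -> : ystep (b + c, g) st = ((ystep (b, g) st).1 + c, (ystep (b, g) st).2).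
  by rewrite /ystep /=; congr pair; zsolve.
by rewrite run_lin.
Qed.

Lemma score_bound l y w1 w2 Bg : (forall x, nrm (sigma x y.2) <= Bg) ->
  score l y w1 w2 <= nrm y.1 + Bg.
Proof.
move=> hB; rewrite /score /val.
set st := run (0, one) w1.
have h1 : nrm st.1 <= Lb * (size w1)%:Z by rewrite /st; have := run_bound (0, one) w1; rewrite /= nrm0 add0r.
have h2 : nrm (ystep y st).1 <= nrm st.1 + nrm y.1 + Bg.
  rewrite /ystep /=; apply: le_trans (nrmD _ _) _; rewrite lerD //.
  by apply: le_trans (nrmD _ _) _; rewrite nrm_act.
have h3 := run_bound (ystep y st) w2.
have h4 := lam_le_nrm l (run (ystep y st) w2).1.
move: h1 h2 h3 h4; set X := lam l _; set Y := nrm (run _ w2).1.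
have h5 := ler_norm X; rewrite PoszD; nia.
Qed.

Lemma adm_ne j y : exists w1 w2, adm j y w1 w2.
Proof.
have [w2 h2] := gen_all (gg j); have [w1 h1] := gen_all (inv (y.2 ** gg j)).
exists w1, w2; split; last by rewrite h2.
by rewrite h1 h2 -gmulA gmulV.
Qed.

Lemma H_ex l j y : exists M, (exists w1 w2, adm j y w1 w2 /\ M = score l y w1 w2) /\
   forall w1 w2, adm j y w1 w2 -> score l y w1 w2 <= M.
Proof.
have ne : exists z, (fun z => exists w1 w2, adm j y w1 w2 /\ z = score l y w1 w2) z.
  by have [w1 [w2 h]] := adm_ne j y; exists (score l y w1 w2), w1, w2.
have ub : exists B, forall z, (fun z => exists w1 w2, adm j y w1 w2 /\ z = score l y w1 w2) z -> z <= B.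
  have [Bg hB] := rwbn y.2; exists (nrm y.1 + Bg) => z [w1 [w2 [_ ->]]].
  exact: score_bound.
have [M [[w1 [w2 [ha ->]]] hM]] := int_max ne ub.
exists (score l y w1 w2); split; first by exists w1, w2.
by move=> u w h; apply: hM; exists u, w.
Qed.

Definition H l j y := proj1_sig (constructive_indefinite_description _ (H_ex l j y)).
Lemma H_ub l j y w1 w2 : adm j y w1 w2 -> score l y w1 w2 <= H l j y.
Proof. exact: (proj2 (proj2_sig (constructive_indefinite_description _ (H_ex l j y)))). Qed.
Lemma H_att l j y : exists w1 w2, adm j y w1 w2 /\ H l j y = score l y w1 w2.
Proof. exact: (proj1 (proj2_sig (constructive_indefinite_description _ (H_ex l j y)))). Qed.

Definition kL i (y : A * G) : A * G := (y.1 + sigma (gen i) y.2, gen i ** y.2).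
Definition kR (y : A * G) i : A * G := (act y.1 (gen i) + sigma y.2 (gen i), y.2 ** gen i).

Lemma ystepL y st i : ystep y (step st i) = ystep (kL i y) st.
Proof.
rewrite /ystep /step /kL /=; congr pair; last by rewrite gmulA.
rewrite actD actM (coc st.2 (gen i) y.2); zsolve.
Qed.

Lemma ystepR y st i : step (ystep y st) i = ystep (kR y i) st.
Proof.
rewrite /ystep /step /kR /=; congr pair; last by rewrite gmulA.
rewrite !actD actM (coc st.2 y.2 (gen i)); zsolve.
Qed.

Lemma H_L l j i y : H l j (kL i y) <= H l j y + Lb.
Proof.
have [w1 [w2 [[ha1 ha2] ->]]] := H_att l j (kL i y).
have ha' : adm j y (rcons w1 i) w2.
  split=> //; by rewrite wprod_rcons -(gmulA L (wp w1)).
have := H_ub l ha'.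
have -> : score l y (rcons w1 i) w2 = score l (kL i y) w1 w2 - Lb.
  rewrite /score /val run_rcons ystepL size_rcons; lia.
lia.
Qed.

Lemma H_R l j i y : j \in J -> H l j (kR y i) <= H l (tauJ (gen i) j) y + Lb.
Proof.
move=> hj; have [w1 [w2 [[ha1 ha2] ->]]] := H_att l j (kR y i).
have ha' : adm (tauJ (gen i) j) y w1 (i :: w2).
  split; first by rewrite wprod_cons gmulA -(gmulA L (wp w1)).
  by move=> a; rewrite wprod_cons -actM ha2 actM (tauJ_spec _ hj).2.
have := H_ub l ha'.
have -> : score l y w1 (i :: w2) = score l (kR y i) w1 w2 - Lb.
  rewrite /score /val /run /= -/(run _ w2) ystepR -/(run _ w2); lia.
lia.
Qed.

Lemma H_shift_le l j b c g : j \in J -> H l j (b + c, g) <= H l j (b, g) + lam l (act c (gg j)).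
Proof.
move=> hj; have [w1 [w2 [[ha1 ha2] ->]]] := H_att l j (b + c, g).
have ha' : adm j (b, g) w1 w2 by split.
have := H_ub l ha'; rewrite /score val_shift lamD ha2; lia.
Qed.

Lemma H_shift l j b c g : j \in J -> H l j (b + c, g) = H l j (b, g) + lam l (act c (gg j)).
Proof.
move=> hj; apply/eqP; rewrite eq_le H_shift_le //=.
have := H_shift_le l (b + c) (- c) g hj; rewrite addrK actN lamN.
move: (H l j (b, g)) (H l j (b + c, g)) (lam l _) => x y z; lia.
Qed.

Definition v l j g := H l j (0, g).
Lemma H_v l j c g : j \in J -> H l j (c, g) = v l j g + lam l (act c (gg j)).
Proof. by move=> hj; rewrite /v -H_shift // add0r. Qed.


Lemma acteq_inv x y : (forall a, act a x = act a y) -> forall a, act a (inv x) = act a (inv y).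
Proof.
move=> h a; have e1 : act (act a (inv y)) x = a by rewrite h actM gmulV act1.
by rewrite -{1}e1 actV.
Qed.

Lemma vL i : exists B, forall l j h, j \in J ->
  `|v l j (gen i ** h) - v l j h + lam l (act (sigma (gen i) h) (gg j))| <= B.
Proof.
have [i' hi'] := gen_inv i.
exists (Lb + (nrm (sigma (inv (gen i)) (gen i)) + nrm (sigma one one))) => l j h hj.
have s1 := H_L l j i (0, h).
rewrite /kL /= add0r H_v // -/(v l j h) in s1.
have s2 := H_L l j i' (kL i (0, h)).
rewrite /kL /= add0r hi' gmulKV !H_v // in s2.
have ee : sigma (gen i) h + sigma (inv (gen i)) (gen i ** h) =
    act (sigma (inv (gen i)) (gen i)) h + sigma one h.
  by rewrite (coc (inv (gen i)) (gen i) h) gmulV; zsolve.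
rewrite ee in s2.
have b : `|lam l (act (act (sigma (inv (gen i)) (gen i)) h + sigma one h) (gg j))| <=
    nrm (sigma (inv (gen i)) (gen i)) + nrm (sigma one one).
  apply: le_trans (mu_le_nrm _ _ hj) _; apply: le_trans (nrmD _ _) _.
  by rewrite nrm_act sig_1h nrm_act.
move: s1 s2 b; set X := lam l (act (act _ h + _) _).
move: (v l j (gen i ** h)) (v l j h) (lam l (act (sigma (gen i) h) (gg j))) => x y z.
move: (nrm (sigma _ _)) (nrm (sigma one one)) => u w.
move=> s1 s2 b; have b' := ler_norm X; have b'' := ler_norm (- X); rewrite normrN in b''.
lia.
Qed.

Lemma vR i : exists B, forall l j g, j \in J ->
  `|v l j (g ** gen i) - v l (tauJ (gen i) j) g| <= B.
Proof.
have [i' hi'] := gen_inv i.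
exists (4 * Lb) => l j g hj.
have [htj _] := tauJ_spec (gen i) hj.
have s1 := H_R l i (0, g) hj.
rewrite /kR /= act0 add0r H_v // -/(v l _ g) in s1.
have b1 : `|lam l (act (sigma g (gen i)) (gg j))| <= Lb.
  by apply: le_trans (mu_le_nrm _ _ hj) _; apply: HLb.
have s2 := H_R l i' (kR (0, g) i) htj.
have hc : gen i' ** gen i = one by rewrite hi' gmulV.
rewrite (tauJ_cancel hc hj) in s2.
have HLb' := HLb i'; rewrite hi' in HLb'.
rewrite /kR /= act0 add0r hi' gmulrK !H_v // -/(v l _ g) in s2.
have b2 : `|lam l (act (act (sigma g (gen i)) (inv (gen i)) + sigma (g ** gen i) (inv (gen i)))
     (gg (tauJ (gen i) j)))| <= Lb + Lb.
  apply: le_trans (mu_le_nrm _ _ htj) _; apply: le_trans (nrmD _ _) _.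
  by rewrite nrm_act lerD.
move: s1 s2 b1 b2; set X := lam l (act (act _ _ + _) _).
move: (v l j (g ** gen i)) (v l (tauJ (gen i) j) g) (lam l (act (sigma g (gen i)) (gg j))) => x y z.
move=> s1 s2 b1 b2; have b' := ler_norm X; have b'' := ler_norm (- X); rewrite normrN in b''.
have b3 := ler_norm z; have b4 := ler_norm (- z); rewrite normrN in b4.
lia.
Qed.

Definition beta l j := act (e l) (inv (gg j)).
Definition chi g := \sum_(l < n) \sum_(j in J) beta l j *~ v l j g.
Local Notation M := (#|J| * N)%N.

Lemma E1 a : \sum_(l < n) \sum_(j in J) beta l j *~ lam l (act a (gg j)) = a *+ M.
Proof.
rewrite exchange_big /= (eq_bigr (fun j => a *+ N)) => [|j _]; last first.
  rewrite (eq_bigr (fun l => act (e l *~ lam l (act a (gg j))) (inv (gg j)))) => [|l _].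
    by rewrite -act_sum lamE actMn actV.
  by rewrite actMz.
by rewrite sumr_const -mulrnA mulnC.
Qed.

Lemma chiL i : exists B, forall h, nrm (chi (gen i ** h) - chi h + sigma (gen i) h *+ M) <= B.
Proof.
have [B hB] := vL i.
exists (\sum_(l < n) \sum_(j in J) nrm (beta l j) * B) => h.
rewrite -E1 /chi -sumrB -big_split /=.
apply: le_trans (nrm_sum _ _ _) _; apply: ler_sum => l _.
rewrite -sumrB -big_split /=.
apply: le_trans (nrm_sum _ _ _) _; apply: ler_sum => j hj.
rewrite -mulrzBr -mulrzDr nrmMz ler_wpM2l ?nrm_ge0 //; exact: hB.
Qed.

Lemma beta_tau l j k : j \in J -> act (beta l (tauJ k j)) k = beta l j.
Proof.
move=> hj; have [_ s] := tauJ_spec k hj.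
rewrite /beta -(acteq_inv s) actM ginvM gmulrVK //.
Qed.

Lemma chiR i : exists B, forall g, nrm (chi (g ** gen i) - act (chi g) (gen i)) <= B.
Proof.
have [B hB] := vR i.
exists (\sum_(l < n) \sum_(j in J) nrm (beta l j) * B) => g.
rewrite /chi act_sum -sumrB.
apply: le_trans (nrm_sum _ _ _) _; apply: ler_sum => l _.
rewrite act_sum [X in _ - X](sumJ_tau _ (gen i)) -sumrB.
apply: le_trans (nrm_sum _ _ _) _; apply: ler_sum => j hj.
rewrite actMz beta_tau // -mulrzBr nrmMz ler_wpM2l ?nrm_ge0 //; exact: hB.
Qed.


Hypothesis repsM : forall M' : nat, (0 < M')%N ->
  exists R : seq A, forall x, exists r c, r \in R /\ x = r + c *+ M'.

Lemma M_gt0 : (0 < M)%N.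
Proof. rewrite muln_gt0 N0 andbT; apply/card_gt0P; exists j1; exact: j1_spec.1. Qed.

Definition cob (phi : G -> A) g h := sigma g h + (act (phi g) h + phi h - phi (g ** h)).

Lemma cob_coc phi : cocycle2 L act (cob phi).
Proof.
move=> g h1 h2; rewrite /cob (coc g h1 h2) !actD !actN !actM gmulA; zsolve.
Qed.

Lemma cx1 tau : cocycle2 L act tau -> forall x, tau x one = tau one one.
Proof.
move=> ct x; have := ct x one one; rewrite gmul1 act1 gmul1r => h.
apply: (addrI (tau x one)); rewrite {3}h; zsolve.
Qed.
Lemma c1h tau : cocycle2 L act tau -> forall h, tau one h = act (tau one one) h.
Proof. by move=> ct h; have := ct one one h; rewrite !gmul1 addrK. Qed.

Lemma rwb_close tau : cocycle2 L act tau ->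
  (forall i, exists B, forall g, nrm (tau g (gen i)) <= B) ->
  forall h, exists B, forall g, nrm (tau g h) <= B.
Proof.
move=> ct hg h; have [w <-] := gen_all h; elim: w => [|i w [B hB]].
  by exists (nrm (tau one one)) => g; rewrite /= cx1.
have [Bi hi] := hg i; exists (Bi + B + B) => g.
rewrite wprod_cons (ct g (gen i) (wp w)).
apply: le_trans (nrmB _ _) _; rewrite lerD //.
by apply: le_trans (nrmD _ _) _; rewrite nrm_act lerD.
Qed.

Lemma lwb_close tau : cocycle2 L act tau ->
  (forall i, exists B, forall h, nrm (tau (gen i) h) <= B) ->
  forall g, exists B, forall h, nrm (tau g h) <= B.
Proof.
move=> ct hg g; have [w <-] := gen_all g; elim: w => [|i w [B hB]].
  by exists (nrm (tau one one)) => h; rewrite /= c1h // nrm_act.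
have [Bi hi] := hg i; exists (Bi + nrm (tau (gen i) (wp w)) + B) => h.
have e1 : tau (wp (i :: w)) h = tau (gen i) (wp w ** h) - act (tau (gen i) (wp w)) h + tau (wp w) h.
  by rewrite wprod_cons (ct (gen i) (wp w) h); zsolve.
rewrite e1; apply: le_trans (nrmD _ _) _; rewrite lerD //.
by apply: le_trans (nrmB _ _) _; rewrite nrm_act lerD.
Qed.

Lemma nrm6 a b c d f k : nrm (a + b - c - d - f + k) <=
  nrm a + nrm b + nrm c + nrm d + nrm f + nrm k.
Proof.
apply: le_trans (nrmD _ _) _; rewrite lerD2r.
apply: le_trans (nrmB _ _) _; rewrite lerD2r.
apply: le_trans (nrmB _ _) _; rewrite lerD2r.
apply: le_trans (nrmB _ _) _; rewrite lerD2r.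
exact: nrmD.
Qed.

Lemma main_phi : exists phi : G -> A,
  (forall h, exists B, forall g, nrm (cob phi g h) <= B) /\
  (forall g, exists B, forall h, nrm (cob phi g h) <= B).
Proof.
have [R HR] := repsM M_gt0.
have [Rb hRb] := nrm_list R.
have HR' : forall g, exists rc : A * A, rc.1 \in R /\ - chi g = rc.1 + rc.2 *+ M.
  by move=> g; have [r [c [h1 h2]]] := HR (- chi g); exists (r, c).
pose rc := fun g => proj1_sig (constructive_indefinite_description _ (HR' g)).
have hrc : forall g, (rc g).1 \in R /\ - chi g = (rc g).1 + (rc g).2 *+ M.
  by move=> g; exact: (proj2_sig (constructive_indefinite_description _ (HR' g))).
pose phi := fun g => (rc g).2; pose rr := fun g => (rc g).1.
have hphi : forall g, phi g *+ M = - chi g - rr g.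
  by move=> g; rewrite (hrc g).2 /rr addrC addKr.
have hrr : forall g, nrm (rr g) <= Rb by move=> g; apply: hRb; exact: (hrc g).1.
exists phi.
have key : forall g h, (cob phi g h) *+ M = sigma g h *+ M - act (chi g) h - act (rr g) h
     - chi h - rr h + chi (g ** h) + rr (g ** h).
  move=> g h; rewrite /cob !mulrnDl ?mulNrn -actMn !hphi !actD !actN; zsolve.
have down : forall x, nrm x <= nrm (x *+ M).
  move=> x; rewrite nrmMn; have := nrm_ge0 x; have := M_gt0.
  move: (nrm x) => y; nia.
split.
- apply: rwb_close; first exact: cob_coc.
  move=> i; have [Bc hBc] := chiR i.
  exists (Bc + Lb * M%:Z + Rb + nrm (chi (gen i)) + Rb + Rb) => g.
  apply: le_trans (down _) _; rewrite key.
  have -> : sigma g (gen i) *+ M - act (chi g) (gen i) - act (rr g) (gen i) - chi (gen i)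
      - rr (gen i) + chi (g ** gen i) + rr (g ** gen i) =
     (chi (g ** gen i) - act (chi g) (gen i)) + sigma g (gen i) *+ M - act (rr g) (gen i)
      - chi (gen i) - rr (gen i) + rr (g ** gen i) by zsolve.
  apply: le_trans (nrm6 _ _ _ _ _ _) _.
  rewrite !lerD // ?nrm_act //.
  rewrite nrmMn ler_wpM2r //; exact: HLb.
- apply: lwb_close; first exact: cob_coc.
  move=> i; have [Bc hBc] := chiL i.
  exists (Bc + 0 + nrm (chi (gen i)) + Rb + Rb + Rb) => h.
  apply: le_trans (down _) _; rewrite key.
  have -> : sigma (gen i) h *+ M - act (chi (gen i)) h - act (rr (gen i)) h - chi h - rr h
      + chi (gen i ** h) + rr (gen i ** h) =
     (chi (gen i ** h) - chi h + sigma (gen i) h *+ M) + 0 - act (chi (gen i)) h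
      - act (rr (gen i)) h - rr h + rr (gen i ** h) by zsolve.
  apply: le_trans (nrm6 _ _ _ _ _ _) _.
  by rewrite nrm0 !lerD // ?nrm_act.
Qed.

End Main.

Lemma main_R (G : Type) (L : group_law G) (A : zmodType) (act : A -> G -> A)
  (sigma : G -> G -> A) :
  fin_gen_group L -> fin_gen_zmod A -> is_action L act -> finite_image act ->
  cocycle2 L act sigma -> right_weakly_bounded sigma ->
  exists phi : G -> A, right_weakly_bounded (cob L act sigma phi) /\
                       left_weakly_bounded (cob L act sigma phi).
Proof.
move=> fg [gens Hg] [act1 actM actD] fi coc rwb.
have [m [gen [gi ga]]] := words_exist fg.
have [p [gg [J [Jd Jc]]]] := classes_exist L fi.
have [lam [e [N [N0 lamD lamE]]]] := zmod_struct Hg.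
have reps := reps_exist Hg.
have rwbn : forall g, exists B, forall x, nrm act gg J lam (sigma x g) <= B.
  move=> g; have [s hs] := rwb g; have [B hB] := nrm_list act gg J lam s.
  by exists B => x; apply: hB; apply: hs.
have [Bf hBf] : exists Bf : 'I_m -> int, forall i x, nrm act gg J lam (sigma x (gen i)) <= Bf i.
  exists (fun i => proj1_sig (constructive_indefinite_description _ (rwbn (gen i)))).
  move=> i; exact: (proj2_sig (constructive_indefinite_description _ (rwbn (gen i)))).
have Lb0 : 0 <= \sum_(i < m) `|Bf i| by apply: sumr_ge0.
have HLb : forall i x, nrm act gg J lam (sigma x (gen i)) <= \sum_(i < m) `|Bf i|.
  move=> i x; apply: le_trans (hBf i x) _; apply: le_trans (ler_norm _) _.
  by rewrite (bigD1 i) //= lerDl sumr_ge0.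
have [phi [hR hL]] := main_phi act1 actM actD coc gi ga Jd Jc N0 lamD lamE Lb0 HLb rwbn reps.
have lb := lam_ball N0 lamD lamE (reps N N0).
exists phi; split.
- move=> h; have [B hB] := hR h; have [s hs] := nrm_ball act1 Jc lb B.
  by exists s => g; apply: hs; apply: hB.
- move=> g; have [B hB] := hL g; have [s hs] := nrm_ball act1 Jc lb B.
  by exists s => h; apply: hs; apply: hB.
Qed.

Lemma in_pairs_fun (A : zmodType) (fs : list (A -> A)) (s : seq A) f x :
  List.In f fs -> x \in s -> - f x \in [seq - f0 x0 | f0 <- fs, x0 <- s].
Proof.
elim: fs => [|f1 fs IH] //= [<- hx|hf hx]; rewrite mem_cat.
  by apply/orP; left; apply: (map_f (fun x0 => - _ x0) hx).
by rewrite IH ?orbT.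
Qed.

Lemma lwb_to_rwb (G : Type) (L : group_law G) (A : zmodType) (act : A -> G -> A)
  (sigma : G -> G -> A) :
  is_action L act -> finite_image act ->
  cocycle2 L act sigma -> left_weakly_bounded sigma ->
  right_weakly_bounded (cob L act sigma (fun g => - sigma (ginv L g) g - sigma (gone L) (gone L))).
Proof.
move=> [act1 actM actD] [fs hfs] coc lwb h.
have [s hs] := lwb (ginv L h).
exists [seq - f0 x0 | f0 <- fs, x0 <- s] => g.
have key : cob L act sigma (fun g => - sigma (ginv L g) g - sigma (gone L) (gone L)) g h =
   - act (sigma (ginv L h) (ginv L g)) (gmul L g h).
  have e1 := coc (gmul L (ginv L h) (ginv L g)) g h.
  rewrite gmulrVK in e1.
  have e2 := coc (ginv L h) (ginv L g) g.
  rewrite gmulV (cx1 act1 coc) in e2.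
  have e3 : sigma (gmul L (ginv L h) (ginv L g)) g = sigma (gone L) (gone L)
      - act (sigma (ginv L h) (ginv L g)) g + sigma (ginv L g) g.
    by rewrite e2; zsolve.
  rewrite /cob ginvM e1 e3 !actD !(actN actD) !actM; zsolve.
rewrite key.
have [f hf ef] := hfs (gmul L g h).
rewrite ef; apply: in_pairs_fun => //; exact: hs.
Qed.


Theorem theorem4p1 (G : Type) (L : group_law G) (A : zmodType)
  (act : A -> G -> A) (sigma : G -> G -> A) :
  fin_gen_group L -> fin_gen_zmod A -> is_action L act -> finite_image act ->
  cocycle2 L act sigma ->
  (right_weakly_bounded sigma \/ left_weakly_bounded sigma) ->
  exists sigma' : G -> G -> A,
    [/\ cocycle2 L act sigma', cohomologous L act sigma sigma',
        right_weakly_bounded sigma' & left_weakly_bounded sigma'].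
Proof.
move=> fg fz ia fi coc hb.
have [act1 actM actD] := ia.
case: hb => [rwb|lwb].
- have [phi [hR hL]] := main_R fg fz ia fi coc rwb.
  exists (cob L act sigma phi); split => //.
    exact: cob_coc actM actD coc phi.
  by exists phi => g h; rewrite /cob; zsolve.
- pose phi0 := fun g => - sigma (ginv L g) g - sigma (gone L) (gone L).
  have c1 := cob_coc actM actD coc phi0.
  have r1 := lwb_to_rwb ia fi coc lwb.
  have [phi [hR hL]] := main_R fg fz ia fi c1 r1.
  exists (cob L act (cob L act sigma phi0) phi); split => //.
    exact: cob_coc actM actD c1 phi.
  exists (fun g => phi0 g + phi g) => g h.
  by rewrite /cob /phi0 !actD ?(actN actD); zsolve.
Qed.
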